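(* Let $N\ge 2$, $Z=\{1,\dots,N\}$, $p\in\mathbb R$, $K<N$, and let $Z$ be partitioned into consecutive blocks (clusters) $\tilde Z_1,\dots,\tilde Z_K$ with $N_k=|\tilde Z_k|$. Let $W_0=(w^{(0)}_{ij})$ be symmetric with $w^{(0)}_{ij}\ge0$ if $i\ne j$ lie in the same cluster and $w^{(0)}_{ij}=0$ if $i=j$ or $i,j$ lie in different clusters, so $W_0=\mathrm{diag}(\tilde W_1,\dots,\tilde W_K)$. Let $\tilde D_k$ be the degree matrix of $\tilde W_k$, $\tilde L_k=\tilde D_k^{-p}(\tilde D_k-\tilde W_k)\tilde D_k^{-p}$, and assume there is $\theta>0$ such that $\langle\mathbf x,\tilde L_k\mathbf x\rangle\ge\theta\langle\mathbf x,\mathbf x\rangle$ for every $k$ and every $\mathbf x\in\mathbb R^{N_k}$ with $\mathbf x\perp\tilde D_k^p\mathbf 1_k$ ($\mathbf 1_k$ the vector of ones in $\mathbb R^{N_k}$). Let $D_0=\mathrm{diag}(d^{(0)}_i)$ be the degree matrix of $W_0$, $L_0=D_0^{-p}(D_0-W_0)D_0^{-p}$ and, for $\tau^2,\alpha>0$, $C_{\tau,0}=\tau^{2\alpha}(L_0+\tau^2I)^{-\alpha}$, with $j$-th column $\mathbf c_{j,0}$. Define $(\pmb\chi_k)_j=(d^{(0)}_j)^p$ if $j\in\tilde Z_k$ and $0$ otherwise, and $\bar{\pmb\chi}_k=\pmb\chi_k/\|\pmb\chi_k\|$. Then, as $\tau\downarrow0$, $$\big\|\mathbf c_{j,0}-(\bar{\pmb\chi}_k)_j\bar{\pmb\chi}_k\big\|^2\le\Xi\,\tau^{4\alpha}\qquad\forall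 j\in\tilde Z_k,$$ where $\Xi>0$ is a uniform constant.
   Context: The degrees of $W_0$ are positive (guaranteed by the spectral gap assumption, which excludes isolated nodes), so $D_0^{-p}$ is defined. Norms and inner products are Euclidean. *)

(* Defs.v *)
From HB Require Import structures.
From mathcomp Require Import all_boot all_order all_algebra.
From mathcomp Require Import boolp classical_sets reals exp.
Set Implicit Arguments. Unset Strict Implicit. Unset Printing Implicit Defensive.
Import Order.TTheory GRing.Theory Num.Theory.
Local Open Scope ring_scope.

Section Defs.
Variable R : realType.

Definition vdot n (x y : 'cV[R]_n) : R := \sum_i x i 0 * y i 0.
Definition vnorm2 n (x : 'cV[R]_n) : R := vdot x x.

Definition deg n (W : 'M[R]_n) (i : 'I_n) : R := \sum_j W i j.
Definition degmx n (W : 'M[R]_n) : 'M[R]_n := diag_mx (\row_i deg W i).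
Definition degpow n (W : 'M[R]_n) (s : R) : 'M[R]_n :=
  diag_mx (\row_i (deg W i) `^ s).

Definition lapl n (p : R) (W : 'M[R]_n) : 'M[R]_n :=
  degpow W (- p) *m (degmx W - W) *m degpow W (- p).

(* Spectral functional calculus for symmetric matrices:
   A = Q diag(l) Q^T with Q orthogonal, f(A) = Q diag(f l) Q^T
   (independent of the chosen decomposition). *)
Definition orth_diag n (A Q : 'M[R]_n) (l : 'rV[R]_n) :=
  Q^T *m Q = 1%:M /\ A = Q *m diag_mx l *m Q^T.

Definition mx_fun n (f : R -> R) (A : 'M[R]_n) : 'M[R]_n :=
  match pselect (exists Ql : 'M[R]_n * 'rV[R]_n, orth_diag A Ql.1 Ql.2) with
  | left H => let Ql := projT1 (cid H) in
              Ql.1 *m diag_mx (map_mx f Ql.2) *m Ql.1^T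
  | right _ => 0
  end.

Definition Ctau n (alpha tau : R) (L : 'M[R]_n) : 'M[R]_n :=
  (tau `^ (2 * alpha)) *: mx_fun (fun l => l `^ (- alpha)) (L + (tau ^+ 2)%:M).

(* Clusters given by a labelling cl : 'I_N -> 'I_K *)
Definition Nk N K (cl : 'I_N -> 'I_K) (k : 'I_K) : nat := #|[set i | cl i == k]|.
Definition blk N K (cl : 'I_N -> 'I_K) (k : 'I_K) (a : 'I_(Nk cl k)) : 'I_N :=
  @enum_val _ (mem [set i | cl i == k]) a.
Definition blockW N K (cl : 'I_N -> 'I_K) (W : 'M[R]_N) (k : 'I_K)
  : 'M[R]_(Nk cl k) := \matrix_(a, b) W (blk a) (blk b).

Definition chi N K (cl : 'I_N -> 'I_K) (W : 'M[R]_N) (p : R) (k : 'I_K) : 'cV[R]_N :=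
  \col_i (if cl i == k then (deg W i) `^ p else 0).
Definition chibar N K (cl : 'I_N -> 'I_K) (W : 'M[R]_N) (p : R) (k : 'I_K) : 'cV[R]_N :=
  (Num.sqrt (vnorm2 (chi cl W p k)))^-1 *: chi cl W p k.

End Defs.

(* Main.v *)
Require Import Defs.
From HB Require Import structures.
From mathcomp Require Import all_boot all_order all_algebra.
From mathcomp Require Import boolp classical_sets reals exp.
From mathcomp Require Import ring lra.
From mathcomp.real_closed Require Import complex.
Set Implicit Arguments. Unset Strict Implicit. Unset Printing Implicit Defensive.
Import Order.TTheory GRing.Theory Num.Theory.
Local Open Scope ring_scope.

Section Spec.
Variable R : realType.

Lemma complex_real (z : R[i]) : z \is Num.real -> exists x : R, z = x%:C%C.
Proof.
case: z => a b; rewrite realE !lecE /= => /orP[] /andP[/eqP hb _].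
  by exists a; rewrite hb.
by exists a; rewrite -hb.
Qed.

Lemma realC_real (x : R) : (x%:C%C : R[i]) \is Num.real.
Proof. by rewrite realE !lecR; case: (lerP 0 x) => // /ltW ->; rewrite orbT. Qed.

Lemma real_eigen n (A : 'M[R]_n.+1) : A^T = A ->
  exists (l : R) (v : 'cV[R]_n.+1), v != 0 /\ A *m v = l *: v.
Proof.
move=> Asym.
pose f := real_complex R.
pose AC := map_mx f A.
have herm : AC \is hermsymmx.
  apply/is_hermitianmxP; rewrite expr0 scale1r.
  apply/matrixP => i j; rewrite !mxE.
  rewrite conj_Creal ?realC_real //.
  by rewrite -[in LHS]Asym mxE.
have nAC := hermitian_normalmx herm.
have /orthomx_spectralP eqA := nAC.
have /mxOverP spr := hermitian_spectral_diag_real herm.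
have [l hl] := complex_real (spr 0 0).
set P := spectralmx AC in eqA.
set sp := spectral_diag AC in eqA hl.
have Pu : P \in unitmx by exact: spectral_unit.
have hdet : \det (A - l%:M) = 0.
  apply/eqP; rewrite -(fmorph_eq0 f) -det_map_mx map_mxB map_scalar_mx /=.
  rewrite -/f -/AC eqA.
  have -> : (f l)%:M = invmx P *m (f l)%:M *m P.
    by rewrite mul_mx_scalar -scalemxAl mulVmx // scalemx1.
  rewrite -mulmxBl -mulmxBr !det_mulmx.
  rewrite -diag_const_mx -linearB det_diag.
  rewrite (bigD1 0) // !mxE hl subrr.
  change (\det (invmx P) * (0 * \prod_(i | true && (i != 0)) (sp - const_mx (f l)) 0 i) * \det P == 0).
  by rewrite mul0r mulr0 mul0r.
have /det0P [v vn0 hv] : \det (A - l%:M) == 0 by rewrite hdet.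
exists l, v^T; split; first by rewrite trmx_eq0.
have hv' : v *m A = l *: v.
  by apply/eqP; rewrite -subr_eq0 -mul_mx_scalar -mulmxBr hv.
by rewrite -[A in A *m _]Asym -trmx_mul hv' linearZ.
Qed.
Lemma cnorm_eq0 n (u : 'cV[R]_n) : (u^T *m u) 0 0 = 0 -> u = 0.
Proof.
rewrite mxE => h.
have h' : \sum_i u i 0 * u i 0 = 0.
  by rewrite -[RHS]h; apply: eq_bigr => i _; rewrite mxE.
apply/matrixP => i j; rewrite ord1 mxE.
have := @psumr_eq0P _ _ _ _ (fun i _ => (sqr_ge0 (u i 0) : 0 <= u i 0 * u i 0)) h' i isT.
by move/eqP; rewrite mulf_eq0 orbb => /eqP.
Qed.

Lemma householder n (v : 'cV[R]_n.+1) : v^T *m v = 1%:M ->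
  exists H : 'M[R]_n.+1, H^T = H /\ H *m H = 1%:M /\ H *m delta_mx 0 0 = v.
Proof.
move=> vn.
set e : 'cV[R]_n.+1 := delta_mx 0 0.
set u := v - e.
set s := (u^T *m u) 0 0.
have ete : e^T *m e = 1%:M by rewrite /e trmx_delta mul_delta_mx; apply/matrixP => i j; rewrite !ord1 !mxE.
have vte : v^T *m e = (v 0 0)%:M.
  by rewrite /e -colE; apply/matrixP => i j; rewrite !ord1 !mxE.
have etv : e^T *m v = (v 0 0)%:M by rewrite -[LHS]trmxK trmx_mul trmxK vte tr_scalar_mx.
have ute : u^T *m e = (u 0 0)%:M.
  by rewrite /e -colE; apply/matrixP => i j; rewrite !ord1 !mxE.
have hs : s = 2 - 2 * v 0 0.
  have tu : u^T = v^T - e^T by apply/matrixP => i j; rewrite !mxE.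
  rewrite /s tu /u mulmxBl !mulmxBr vn ete vte etv !mxE /=.
  rewrite mulr1n; lra.
case: (eqVneq s 0) => [s0|sn0].
  have u0 := cnorm_eq0 s0.
  exists 1%:M; split; first by rewrite trmx1.
  split; first by rewrite mulmx1.
  by rewrite mul1mx; apply/eqP; rewrite eq_sym -subr_eq0 -/u u0.
set c := 2 / s.
set X := u *m u^T.
have XX : X *m X = s *: X.
  by rewrite /X mulmxA -(mulmxA u) (mx11_scalar (u^T *m u)) -/s mul_mx_scalar -scalemxAl.
exists (1%:M - c *: X); split.
  by rewrite linearB /= trmx1 linearZ /= /X trmx_mul trmxK.
split.
  rewrite mulmxBl mul1mx mulmxBr mulmx1 -scalemxAl -scalemxAr XX !scalerA.
  have -> : c * c * s = c + c by rewrite /c; field.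
  by rewrite scalerDl opprB addrK subrK.
rewrite mulmxBl mul1mx -scalemxAl /X -mulmxA ute mul_mx_scalar scalerA.
have -> : c * u 0 0 = -1.
  have hne : 2 - 2 * v 0 0 != 0 by rewrite -hs.
  rewrite /c hs /u /e !mxE eqxx mulr1n.
  have h2 : v 0 0 - 1 != 0 by apply: contraNneq hne => h; apply/eqP; lra.
  by field.
by rewrite scaleN1r opprK /u addrC subrK.
Qed.

Lemma spectral n (A : 'M[R]_n) : A^T = A ->
  exists Ql : 'M[R]_n * 'rV[R]_n,
    Ql.1^T *m Ql.1 = 1%:M /\ A = Ql.1 *m diag_mx Ql.2 *m Ql.1^T.
Proof.
elim: n A => [|n IH] A Asym.
  exists (1%:M, 0); split; first by rewrite trmx1 mulmx1.
  by rewrite (flatmx0 A) (flatmx0 (_ *m _ *m _)).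
have [l [v0 [v0n0 Av0]]] := real_eigen Asym.
set s0 := (v0^T *m v0) 0 0.
have s0n0 : s0 != 0 by apply: contra v0n0 => /eqP /cnorm_eq0 ->.
have s0ge : 0 <= s0.
  rewrite /s0 mxE; apply: sumr_ge0 => i _; rewrite mxE; exact: (sqr_ge0 (v0 i 0)).
have s0gt : 0 < s0 by rewrite lt_def s0n0.
set a := (Num.sqrt s0)^-1.
set v := a *: v0.
have vn : v^T *m v = 1%:M.
  have tv : v^T = a *: v0^T by apply/matrixP => i j; rewrite !mxE.
  rewrite tv /v -scalemxAl -scalemxAr scalerA (mx11_scalar (v0^T *m v0)) -/s0.

  by rewrite /a -expr2 exprVn sqr_sqrtr // -[s0%:M]scalemx1 scalerA mulVf // scale1r.
have Av : A *m v = l *: v by rewrite /v -scalemxAr Av0 !scalerA mulrC.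
have [H [HT [HH He]]] := householder vn.
set B := H *m A *m H.
have BT : B^T = B by rewrite /B !trmx_mul HT Asym mulmxA.
have Be : B *m (delta_mx 0 0 : 'cV[R]_n.+1) = l *: delta_mx 0 0.
  by rewrite /B -!mulmxA He Av -scalemxAr -He mulmxA HH mul1mx.
have Bi0 : forall i, B i 0 = l * (i == 0)%:R.
  move=> i; have := congr1 (fun M : 'cV[R]_n.+1 => M i 0) Be.
  by rewrite /= -colE !mxE eqxx andbT.
have hB : B = H *m A *m H by [].
clearbody B.
have Bblk : (B : 'M_(1 + n)) = block_mx l%:M 0 0 (drsubmx (B : 'M_(1 + n))).
  rewrite -[LHS](submxK (B : 'M_(1 + n))); congr block_mx.
  - apply/matrixP => i j; rewrite !ord1 !mxE /=.
    have -> : lshift n (0 : 'I_1) = 0 by apply/val_inj.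
    by rewrite Bi0 eqxx mulr1 mulr1n.
  - apply/matrixP => i j; rewrite !ord1 !mxE /=.
    have -> : lshift n (0 : 'I_1) = 0 by apply/val_inj.
    rewrite -[B]BT mxE Bi0 mulr_natr mulr0n //.
  - apply/matrixP => i j; rewrite !ord1 !mxE /=.
    have -> : lshift n (0 : 'I_1) = 0 by apply/val_inj.
    by rewrite Bi0 mulr_natr mulr0n.
set B' := drsubmx (B : 'M_(1 + n)).
have B'T : B'^T = B' by rewrite /B' trmx_drsub BT.
have [[Q' l'] [/= HQ' EQ']] := IH B' B'T.
have dl : diag_mx (l%:M : 'rV[R]_1) = l%:M.
  by apply/matrixP => i j; rewrite !ord1 !mxE.
exists (H *m (block_mx (1%:M : 'M[R]_1) 0 0 Q' : 'M_n.+1), (row_mx (l%:M : 'rV[R]_1) l' : 'rV_n.+1)); split => /=.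
  rewrite trmx_mul HT mulmxA -(mulmxA _ H H) HH mulmx1 (@tr_block_mx _ 1 n 1 n) !trmx0 trmx1.
  rewrite (@mulmx_block _ 1 n 1 n 1 n) HQ' !mul0mx !mulmx0 !addr0 !add0r mulmx1.
  by rewrite -scalar_mx_block.
have HAH : A = H *m B *m H by rewrite hB !mulmxA HH mul1mx -mulmxA HH mulmx1.
rewrite {1}HAH Bblk -/B' EQ' (@diag_mx_row _ n 1) dl trmx_mul HT (@tr_block_mx _ 1 n 1 n) !trmx0 trmx1.
rewrite -!mulmxA; congr (_ *m _); rewrite !mulmxA; congr (_ *m _).
rewrite !(@mulmx_block _ 1 n 1 n 1 n) !mul0mx !mulmx0 !addr0 !add0r !mulmx1 !mul1mx.
by rewrite mul0mx.
Qed.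
End Spec.

Section Core.
Variable R : realType.
Implicit Types n : nat.

Lemma vdotE n (x y : 'cV[R]_n) : vdot x y = (x^T *m y) 0 0.
Proof. by rewrite /vdot mxE; apply: eq_bigr => i _; rewrite mxE. Qed.

Lemma vdotC n (x y : 'cV[R]_n) : vdot x y = vdot y x.
Proof. by rewrite /vdot; apply: eq_bigr => i _; rewrite mulrC. Qed.

Lemma vdotZr n (x y : 'cV[R]_n) a : vdot x (a *: y) = a * vdot x y.
Proof. by rewrite /vdot mulr_sumr; apply: eq_bigr => i _; rewrite mxE mulrCA. Qed.

Lemma vdotBr n (x y z : 'cV[R]_n) : vdot x (y - z) = vdot x y - vdot x z.
Proof. by rewrite /vdot -sumrB; apply: eq_bigr => i _; rewrite !mxE mulrBr. Qed.

Lemma vdot0r n (x : 'cV[R]_n) : vdot x 0 = 0.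
Proof. by rewrite /vdot big1 // => i _; rewrite mxE mulr0. Qed.

Lemma vdot0l n (x : 'cV[R]_n) : vdot 0 x = 0.
Proof. by rewrite vdotC vdot0r. Qed.

Lemma vdot_sumr n (I : finType) (x : 'cV[R]_n) (F : I -> 'cV[R]_n) :
  vdot x (\sum_k F k) = \sum_k vdot x (F k).
Proof.
rewrite /vdot [RHS]exchange_big /=; apply: eq_bigr => i _.
by rewrite summxE mulr_sumr.
Qed.

Lemma vdot_ge0 n (x : 'cV[R]_n) : 0 <= vdot x x.
Proof. by apply: sumr_ge0 => i _; exact: (sqr_ge0 (x i 0)). Qed.

Lemma vdot_eq0 n (u : 'cV[R]_n) : vdot u u = 0 -> u = 0.
Proof.
move=> h'.
apply/matrixP => i j; rewrite ord1 mxE.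
have := @psumr_eq0P _ _ _ _ (fun i _ => (sqr_ge0 (u i 0) : 0 <= u i 0 * u i 0)) h' i isT.
by move/eqP; rewrite mulf_eq0 orbb => /eqP.
Qed.

Lemma vdot_sym n (L : 'M[R]_n) x y : L^T = L -> vdot x (L *m y) = vdot (L *m x) y.
Proof. by move=> LT; rewrite !vdotE trmx_mul LT mulmxA. Qed.

Lemma vdot_col_tr n (Q : 'M[R]_n) i (x : 'cV[R]_n) : (Q^T *m x) i 0 = vdot (col i Q) x.
Proof. by rewrite /vdot mxE; apply: eq_bigr => j _; rewrite !mxE. Qed.

Lemma vnorm_orth n (Q : 'M[R]_n) (g : 'cV[R]_n) : Q^T *m Q = 1%:M ->
  vnorm2 (Q *m g) = vnorm2 g.
Proof.
by move=> QQ; rewrite /vnorm2 !vdotE trmx_mul !mulmxA -(mulmxA g^T) QQ mulmx1.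
Qed.

Lemma core n K (L Q : 'M[R]_n) (l : 'rV[R]_n) (t th a : R) (chi : 'I_K -> 'cV[R]_n) :
  L^T = L -> 0 < t -> 0 < th -> 0 < a ->
  (forall k, L *m chi k = 0) ->
  (forall k k', k != k' -> vdot (chi k) (chi k') = 0) ->
  (forall y, (forall k, vdot y (chi k) = 0) -> th * vdot y y <= vdot y (L *m y)) ->
  Q^T *m Q = 1%:M -> L + (t^+2)%:M = Q *m diag_mx l *m Q^T ->
  (forall k, (t `^ (2*a) *: (Q *m diag_mx (map_mx (fun x => x `^ (-a)) l) *m Q^T))
               *m chi k = chi k) /\
  (forall r, (forall k, vdot r (chi k) = 0) ->
     vnorm2 ((t `^ (2*a) *: (Q *m diag_mx (map_mx (fun x => x `^ (-a)) l) *m Q^T)) *m r)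
       <= (th `^ (-a))^+2 * t `^ (4*a) * vnorm2 r).
Proof.
move=> LT t0 th0 a0 Lchi orth gap QQ EM.
have QQt : Q *m Q^T = 1%:M := mulmx1C QQ.
set fl := map_mx _ l.
pose mu i := l 0 i - t^+2.
have Lq : forall i, L *m col i Q = mu i *: col i Q.
  move=> i.
  have LQ : L *m Q = Q *m diag_mx l - t^+2 *: Q.
    have : (L + (t^+2)%:M) *m Q = Q *m diag_mx l by rewrite EM -mulmxA QQ mulmx1.
    by rewrite mulmxDl mul_scalar_mx => <-; rewrite addrK.
  rewrite [in LHS]colE mulmxA LQ -colE mul_mx_diag; apply/matrixP => j k; rewrite !mxE /mu.
  ring.
have qq : forall i, vdot (col i Q) (col i Q) = 1.
  move=> i; have := congr1 (fun M : 'M[R]_n => M i i) QQ; rewrite /= !mxE eqxx mulr1n => <-.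
  by rewrite /vdot; apply: eq_bigr => j _; rewrite !mxE.
have E1 : forall i k, mu i != 0 -> vdot (col i Q) (chi k) = 0.
  move=> i k mun0.
  have : mu i * vdot (chi k) (col i Q) = 0 by rewrite -vdotZr -Lq vdot_sym // Lchi vdot0l.
  by move/eqP; rewrite mulf_eq0 (negPf mun0) /= vdotC => /eqP.
have E2 : forall i, mu i != 0 -> th <= mu i.
  move=> i mun0; have := gap _ (fun k => E1 i k mun0).
  by rewrite Lq vdotZr qq !mulr1.
have E3 : forall i r, mu i = 0 -> (forall k, vdot r (chi k) = 0) -> vdot (col i Q) r = 0.
  move=> i r mu0 hr.
  set q := col i Q.
  pose c k := vdot q (chi k) / vdot (chi k) (chi k).
  set y := q - \sum_k c k *: chi k.
  have Ly : L *m y = 0.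
    rewrite mulmxBr Lq mu0 scale0r mulmx_sumr big1 ?subr0 // => k _.
    by rewrite -scalemxAr Lchi scaler0.
  have yo : forall k', vdot y (chi k') = 0.
    move=> k'; rewrite /y vdotC vdotBr vdot_sumr (bigD1 k') //= big1 => [|k kk']; last first.
      by rewrite vdotZr orth ?mulr0 // eq_sym.
    rewrite addr0 vdotZr /c.
    case: (eqVneq (vdot (chi k') (chi k')) 0) => [h0|hn0].
      by rewrite h0 mulr0 subr0 (vdot_eq0 h0) vdot0l.
    by rewrite divfK // vdotC subrr.
  have y0 : y = 0.
    apply: vdot_eq0; apply/eqP; rewrite eq_le vdot_ge0 andbT.
    have := gap y yo; rewrite Ly vdot0r => h.
    by rewrite -(pmulr_rle0 _ th0).
  have -> : q = \sum_k c k *: chi k by apply/eqP; rewrite -subr_eq0 -/y y0.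
  by rewrite vdotC vdot_sumr big1 // => k _; rewrite vdotZr hr mulr0.
have h2a : t `^ (2*a) = (t^+2) `^ a by rewrite powRrM powR_mulrn // ltW.
have h4a : t `^ (4*a) = (t `^ (2*a))^+2.
  by rewrite -powR_mulrn ?powR_ge0 // -powRrM; congr (_ `^ _); ring.
split.
- move=> k.
  set w := Q^T *m chi k.
  have key : t `^ (2*a) *: (diag_mx fl *m w) = w.
    apply/matrixP => i j; rewrite ord1 mxE mul_diag_mx mxE /fl mxE.
    case: (eqVneq (mu i) 0) => [m0|mn0].
      move/eqP: m0; rewrite subr_eq0 => /eqP ->.
      rewrite mulrA h2a powRN mulfV ?mul1r //.
      by rewrite gt_eqF // powR_gt0 // exprn_gt0.
    by rewrite /w vdot_col_tr E1 // !mulr0.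
  by rewrite -scalemxAl -!mulmxA -/w scalemxAr key mulmxA QQt mul1mx.
- move=> r hr.
  set z := Q^T *m r.
  set g := t `^ (2*a) *: (diag_mx fl *m z).
  have -> : t `^ (2*a) *: (Q *m diag_mx fl *m Q^T) *m r = Q *m g.
    by rewrite -scalemxAl -!mulmxA -/z scalemxAr.
  rewrite vnorm_orth //.
  have -> : vnorm2 r = vnorm2 z by rewrite /z vnorm_orth // trmxK.
  rewrite /vnorm2 /vdot mulr_sumr; apply: ler_sum => i _.
  rewrite /g mxE mul_diag_mx mxE /fl mxE.
  case: (eqVneq (mu i) 0) => [m0|mn0].
    by rewrite /z vdot_col_tr E3 // !mulr0.
  have lge : th <= l 0 i.
    have := E2 i mn0; rewrite /mu => h.
    have : 0 <= t^+2 by exact: sqr_ge0.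
    lra.
  have XY : l 0 i `^ (-a) <= th `^ (-a).
    rewrite !powRN lef_pV2 ?posrE ?powR_gt0 //; last exact: (lt_le_trans th0 lge).
    apply: ge0_ler_powR => //; rewrite ?nnegrE ?ltW //; exact: (lt_le_trans th0 lge).
  have X0 : 0 <= l 0 i `^ (-a) by apply: powR_ge0.
  set X := l 0 i `^ (-a) in XY X0 *.
  set Y := th `^ (-a) in XY *.
  set P := t `^ (2*a) in h4a *.
  set zi := z i 0.
  rewrite h4a.
  have -> : P * (X * zi) * (P * (X * zi)) = X^+2 * (P^+2 * (zi * zi)) by ring.
  have -> : Y^+2 * P^+2 * (zi * zi) = Y^+2 * (P^+2 * (zi * zi)) by ring.
  apply: ler_wpM2r; first by rewrite mulr_ge0 ?sqr_ge0 //; exact: (sqr_ge0 zi).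
  by rewrite ler_pXn2r ?nnegrE // (le_trans X0 XY).
Qed.

End Core.

Section Inst.
Variable R : realType.

Lemma laplE n p (M : 'M[R]_n) a b :
  lapl p M a b = deg M a `^ (-p) * ((a == b)%:R * deg M a - M a b) * deg M b `^ (-p).
Proof.
rewrite /lapl /degpow /degmx mul_mx_diag mxE mul_diag_mx !mxE.
by rewrite mulr_natl.
Qed.

Lemma sum_blk N K (cl : 'I_N -> 'I_K) k (F : 'I_N -> R) :
  \sum_(i | cl i == k) F i = \sum_(a < Nk cl k) F (@blk _ _ cl k a).
Proof.
rewrite /Nk /blk -(big_enum_val (A := mem [set i | cl i == k])) /=.
by apply: eq_bigl => i; rewrite !inE.
Qed.

Lemma cl_blk N K (cl : 'I_N -> 'I_K) k a : cl (@blk _ _ cl k a) = k.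
Proof. by have := enum_valP a; rewrite inE => /eqP. Qed.

Lemma blk_inj N K (cl : 'I_N -> 'I_K) k : injective (@blk _ _ cl k).
Proof. exact: enum_val_inj. Qed.

Lemma deg_blk N K (cl : 'I_N -> 'I_K) (W : 'M[R]_N) k a :
  (forall i j, cl i != cl j -> W i j = 0) ->
  deg (blockW cl W k) a = deg W (@blk _ _ cl k a).
Proof.
move=> Woff; rewrite /deg.
rewrite (bigID (fun j => cl j == k)) /= [X in _ + X]big1 ?addr0; last first.
  by move=> j hj; apply: Woff; rewrite cl_blk eq_sym.
rewrite sum_blk; apply: eq_bigr => b _; by rewrite mxE.
Qed.


Lemma gap_inst N K (cl : 'I_N -> 'I_K) (W : 'M[R]_N) p th :
  (forall i j, cl i != cl j -> W i j = 0) ->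
  (forall k (x : 'cV[R]_(Nk cl k)),
      vdot x (degpow (blockW cl W k) p *m const_mx 1) = 0 ->
      th * vdot x x <= vdot x (lapl p (blockW cl W k) *m x)) ->
  forall y : 'cV[R]_N, (forall k, vdot y (chi cl W p k) = 0) ->
    th * vdot y y <= vdot y (lapl p W *m y).
Proof.
move=> Woff gap y hy.
pose x k : 'cV[R]_(Nk cl k) := \col_a y (@blk _ _ cl k a) 0.
have Lblk : forall k a b, lapl p (blockW cl W k) a b
    = lapl p W (@blk _ _ cl k a) (@blk _ _ cl k b).
  by move=> k a b; rewrite !laplE !deg_blk // mxE (inj_eq (@blk_inj _ _ cl k)).
have hx : forall k, th * vdot (x k) (x k) <= vdot (x k) (lapl p (blockW cl W k) *m x k).
  move=> k; apply: gap.
  rewrite -(hy k) /vdot.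
  rewrite [RHS](bigID (fun i => cl i == k)) /= [X in _ + X]big1 ?addr0; last first.
    by move=> i /negPf hi; rewrite mxE hi mulr0.
  rewrite sum_blk; apply: eq_bigr => a _.
  by rewrite mul_diag_mx !mxE deg_blk // cl_blk eqxx mulr1.
have split_sum : forall F : 'I_N -> R,
    \sum_i F i = \sum_k \sum_(a < Nk cl k) F (@blk _ _ cl k a).
  move=> F; rewrite (partition_big cl xpredT) //=; apply: eq_bigr => k _.
  by rewrite -sum_blk.
have e1 : vdot y y = \sum_k vdot (x k) (x k).
  by rewrite /vdot split_sum; apply: eq_bigr => k _; apply: eq_bigr => a _; rewrite !mxE.
have e2 : vdot y (lapl p W *m y) = \sum_k vdot (x k) (lapl p (blockW cl W k) *m x k).
  rewrite /vdot split_sum; apply: eq_bigr => k _; apply: eq_bigr => a _.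
  rewrite !mxE; congr (_ * _).
  rewrite (bigID (fun j => cl j == k)) /= [X in _ + X]big1 ?addr0; last first.
    move=> j hj.
    have hne : @blk _ _ cl k a != j by apply: contraNneq hj => <-; rewrite cl_blk.
    by rewrite laplE (negPf hne) Woff ?cl_blk 1?eq_sym // mul0r subrr mulr0 !mul0r.
  rewrite sum_blk; apply: eq_bigr => b _; rewrite Lblk; congr (_ * _); by rewrite /x mxE.
rewrite e1 e2 mulr_sumr; apply: ler_sum => k _; exact: hx.
Qed.

Lemma lapl_sym n p (W : 'M[R]_n) : W^T = W -> (lapl p W)^T = lapl p W.
Proof.
move=> WT; apply/matrixP => a b; rewrite mxE !laplE.
have hW : W b a = W a b by rewrite -{1}WT mxE.
case: (eqVneq a b) => [->//|hab].
rewrite hW !mul0r !sub0r; ring.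
Qed.

Lemma chi_orth N K (cl : 'I_N -> 'I_K) (W : 'M[R]_N) p k k' : k != k' ->
  vdot (chi cl W p k) (chi cl W p k') = 0.
Proof.
move=> hkk; rewrite /vdot big1 // => i _; rewrite !mxE.
case: eqP => [hk|_]; last by rewrite mul0r.
case: eqP => [hk'|_]; last by rewrite mulr0.
by move: hkk; rewrite -hk -hk' eqxx.
Qed.

Lemma lapl_chi N K (cl : 'I_N -> 'I_K) (W : 'M[R]_N) p k :
  (forall i j, cl i != cl j -> W i j = 0) -> (forall i, 0 < deg W i) ->
  lapl p W *m chi cl W p k = 0.
Proof.
move=> Woff dpos.
have ind : degpow W (-p) *m chi cl W p k = \col_j (cl j == k)%:R.
  apply/matrixP => i j; rewrite ord1 mul_diag_mx !mxE.
  case: eqP => _; last by rewrite mulr0.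
  by rewrite powRN mulVf // gt_eqF // powR_gt0.
rewrite /lapl -mulmxA ind -mulmxA mulmxBl.
have -> : degmx W *m \col_j (cl j == k)%:R = W *m \col_j (cl j == k)%:R.
  apply/matrixP => i j; rewrite mul_diag_mx !mxE /deg mulr_suml.
  apply: eq_bigr => l _; rewrite !mxE.
  case: (eqVneq (cl i) (cl l)) => [->//|hne].
  by rewrite Woff // !mul0r.
by rewrite subrr mulmx0.
Qed.

End Inst.


Theorem proposition2p9 (R : realType) (N K : nat) (p theta alpha : R)
    (cl : 'I_N -> 'I_K) (W : 'M[R]_N) :
  (2 <= N)%N -> (K < N)%N ->
  (* clusters are consecutive, nonempty blocks *)
  (forall i j : 'I_N, (i <= j)%N -> (cl i <= cl j)%N) ->
  (forall k : 'I_K, exists i : 'I_N, cl i = k) ->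
  (* W_0 symmetric, block diagonal, nonnegative, zero diagonal *)
  W^T = W ->
  (forall i j, i != j -> cl i = cl j -> 0 <= W i j) ->
  (forall i, W i i = 0) ->
  (forall i j, cl i != cl j -> W i j = 0) ->
  (* positive degrees (standing assumption) *)
  (forall i, 0 < deg W i) ->
  0 < alpha -> 0 < theta ->
  (* uniform spectral gap of each block Laplacian *)
  (forall (k : 'I_K) (x : 'cV[R]_(Nk cl k)),
      vdot x (degpow (blockW cl W k) p *m const_mx 1) = 0 ->
      theta * vdot x x <= vdot x (lapl p (blockW cl W k) *m x)) ->
  exists Xi : R, 0 < Xi /\
  exists tau0 : R, 0 < tau0 /\
  forall tau : R, 0 < tau -> tau < tau0 ->
  forall (k : 'I_K) (j : 'I_N), cl j = k ->
    vnorm2 (col j (Ctau alpha tau (lapl p W)) - (chibar cl W p k j 0) *: chibar cl W p k)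
      <= Xi * tau `^ (4 * alpha).
Proof.
move=> N2 KN cons ne WT Wnn Wdiag Woff dpos a0 th0 gap.
have LT := lapl_sym p WT.
have Lchi := fun k => lapl_chi p k Woff dpos.
have orth := @chi_orth R N K cl W p.
have gapL := gap_inst Woff gap.
exists ((theta `^ (-alpha))^+2); split; first by rewrite exprn_gt0 // powR_gt0.
exists 1; split => // tau t0 _ k j hj.
have Msym : (lapl p W + (tau^+2)%:M)^T = lapl p W + (tau^+2)%:M.
  by rewrite raddfD /= tr_scalar_mx LT.
rewrite /Ctau /mx_fun; case: pselect => [H|nH]; last first.
  exfalso; apply: nH; have [[Q l] [h1 h2]] := spectral Msym; by exists (Q, l).
case: (cid H) => [[Q l] [HQ HM]] /=.
have [Cfix Cbound] := core LT t0 th0 a0 Lchi orth gapL HQ HM.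
set C := _ *: _ in Cfix Cbound *.
set ch := chi cl W p k in Cfix.
set nc := vnorm2 ch.
have chj : ch j 0 = deg W j `^ p by rewrite /ch mxE hj eqxx.
have ncpos : 0 < nc.
  rewrite lt_def vdot_ge0 andbT; apply/eqP => /vdot_eq0 h.
  have := congr1 (fun M : 'cV[R]_N => M j 0) h; rewrite /= chj mxE.
  by move/eqP; rewrite gt_eqF // powR_gt0.
set c := ch j 0 / nc.
have hv : chibar cl W p k j 0 *: chibar cl W p k = c *: ch.
  rewrite /chibar -/ch -/nc mxE scalerA; congr (_ *: _).
  by rewrite /c mulrC mulrA -invfM -expr2 sqr_sqrtr ?ltW // mulrC.
set e : 'cV[R]_N := delta_mx j 0.
have vde : forall x : 'cV[R]_N, vdot e x = x j 0.
  by move=> x; rewrite vdotE /e trmx_delta -rowE mxE.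
set r := e - c *: ch.
have hr : forall k', vdot r (chi cl W p k') = 0.
  move=> k'; rewrite vdotC vdotBr vdotZr vdotC vde.
  case: (eqVneq k' k) => [->|hk].
    by rewrite -/ch -/nc /c divfK ?gt_eqF // subrr.
  by rewrite orth // mulr0 mxE hj eq_sym (negPf hk) subr0.
have -> : col j C - chibar cl W p k j 0 *: chibar cl W p k = C *m r.
  by rewrite hv /r mulmxBr -scalemxAr Cfix colE.
apply: le_trans (Cbound r hr) _.
rewrite -[X in _ <= X]mulr1; apply: ler_wpM2l.
  by rewrite mulr_ge0 ?powR_ge0 // sqr_ge0.
have -> : vnorm2 r = 1 - c * ch j 0.
  rewrite /vnorm2 {2}/r vdotBr vdotZr hr mulr0 subr0 vdotC vde.
  by rewrite /r !mxE eqxx.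
rewrite lerBlDr lerDl /c mulrAC; apply: mulr_ge0; last by rewrite invr_ge0 ltW.
exact: sqr_ge0.
Qed.
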